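(* Let $M$ be a square-integrable $\{\mathcal F_t\}$-martingale, let $\alpha\in\mathbb N$, and put $N^\alpha_t=M_{T_\alpha\wedge t}-M_{T_{\alpha-1}\wedge t}$. Suppose $g^\alpha\in G^\alpha$ represents $N^\alpha$, i.e. $N^\alpha_t=\int_{]0,t]\times E} g^\alpha(s,x)\,q^\alpha(ds,dx)$ a.s. for all $t$. Define $\tilde g^\alpha(t,x)=I_{\{t\in]T_{\alpha-1},T_\alpha]\}}\,g^\alpha(t,x)$. Then $\tilde g^\alpha$ also represents $N^\alpha$, i.e. $N^\alpha_t=\int_{]0,t]\times E}\tilde g^\alpha(s,x)\,q^\alpha(ds,dx)$ a.s. for all $t$.
   Context: Marked point process setting: $(E,\mathcal E)$ is a Blackwell space. $X$ is a right-constant jump process with values in $E$, with fixed initial position $X_0=\xi_0\in E$; at random times $0<T_1<T_2<\cdots\le\infty$ it jumps to random locations $\xi_1,\xi_2,\dots$ with $\xi_\alpha\neq\xi_{\alpha-1}$. It is assumed that $T_n\to\infty$ almost surely. Put $T_0=0$. The sample space is $\Omega\subset([0,\infty]\times E)^{\mathbb N}$, $\mathcal F=\sigma\{X_s: s<\infty\}$, $P$ is a given probability, and $\mathcal F_t$ is the $P$-completion of $\sigma\{X_s: s\le t\}$. For $\alpha\ge1$ let $\mu^\alpha(\omega;\cdot)$ be a regular conditional distribution of $(T_\alpha,\xi_\alpha)$ given $\mathcal F_{T_{\alpha-1}}$ on $[0,\infty]\times E$; $F^\alpha_t(A)=\mu^\alpha(]t,\infty]\times A)$. Define $p^\alpha(t,A)=I_{\{t\ge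 T_\alpha\}}I_{\{\xi_\alpha\in A\}}$, $\tilde p^\alpha(t,A)=-\int_{]0,t\wedge T_\alpha]}(F^\alpha_{u-}(E))^{-1}\,dF^\alpha_u(A)$, and $q^\alpha=p^\alpha-\tilde p^\alpha$ (a martingale random measure). $G^\alpha$ denotes the set of measurable functions $g^\alpha:\Omega\times[0,\infty]\times E\to\mathbb R$ such that for each $(t,x)$, $g^\alpha(\cdot,t,x)$ is $\mathcal F_{T_{\alpha-1}}$-measurable. *)

(* Defs.v *)
From HB Require Import structures.
From mathcomp Require Import all_boot all_order all_algebra.
From mathcomp Require Import all_classical all_reals all_analysis.
From mathcomp Require Import measurable_realfun.
Import Order.TTheory GRing.Theory Num.Theory.

Set Implicit Arguments.
Unset Strict Implicit.
Unset Printing Implicit Defensive.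

Local Open Scope classical_set_scope.
Local Open Scope ring_scope.

Section MarkedPointProcess.
Context {R : realType} {d dE : measure_display}
  {Omega : measurableType d} {E : measurableType dE}.
Variable P : probability Omega R.
Variables (T : nat -> Omega -> \bar R) (xi : nat -> Omega -> E).

Definition mpp_assumptions (x0 : E) : Prop :=
  [/\ (forall w, T 0%N w = 0%E) /\ (forall w, xi 0%N w = x0),
      (forall n w, (T n w < T n.+1 w)%E \/ (T n w = +oo%E /\ T n.+1 w = +oo%E)),
      (forall n w, (T n.+1 w < +oo)%E -> ~ (xi n.+1 w = xi n w)),
      (forall n, measurable_fun setT (T n)) /\ (forall n, measurable_fun setT (xi n))
    & {ae P, forall w, (fun n => T n w) @ \oo --> +oo%E}].

Definition jump_index (s : R) (w : Omega) : nat :=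
  xget 0%N [set n | (T n w <= s%:E)%E /\ (s%:E < T n.+1 w)%E].

Definition Xproc (s : R) (w : Omega) : E := xi (jump_index s w) w.

Definition gen_by_X (I : set R) : set (set Omega) :=
  smallest (sigma_algebra setT)
    [set A | exists s, I s /\ exists2 B, measurable B & A = Xproc s @^-1` B].

Definition Fcal : set (set Omega) := gen_by_X [set s | 0 <= s].

Definition P_completion (G : set (set Omega)) : set (set Omega) :=
  [set A | exists B, G B /\ exists N, Fcal N /\ P N = 0%E /\
      ((A `\` B) `|` (B `\` A)) `<=` N].

Definition Ft (t : R) : set (set Omega) :=
  P_completion (gen_by_X [set s | 0 <= s <= t]).

Definition Finf : set (set Omega) := P_completion Fcal.

Definition Fstop (tau : Omega -> \bar R) : set (set Omega) :=
  [set A | Finf A /\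
     forall t, 0 <= t -> Ft t (A `&` [set w | (tau w <= t%:E)%E])].

Definition meas_wrt (G : set (set Omega)) {d' : measure_display}
  {Y : measurableType d'} (f : Omega -> Y) : Prop :=
  forall B, measurable B -> G (f @^-1` B).

Definition is_rcd (G : set (set Omega)) (Z : Omega -> (\bar R * E)%type)
  (mu : Omega -> probability (\bar R * E)%type R) : Prop :=
  (forall B, measurable B -> @meas_wrt G _ (\bar R) (fun w => mu w B)) /\
  (forall B, measurable B -> forall C, G C ->
      (P (C `&` (Z @^-1` B)) = \int[P]_(w in C) mu w B)%E).

Definition is_martingale (M : R -> Omega -> R) : Prop :=
  [/\ (forall t, 0 <= t -> meas_wrt (Ft t) (M t)),
      (forall t, 0 <= t -> P.-integrable setT (EFin \o M t))
    & (forall s t, 0 <= s -> s <= t -> forall A, Ft s A ->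
        (\int[P]_(w in A) (M t w)%:E = \int[P]_(w in A) (M s w)%:E)%E)].

Definition sq_integrable (M : R -> Omega -> R) : Prop :=
  exists K : R, forall t, 0 <= t ->
    (\int[P]_w ((M t w) ^+ 2)%:E <= K%:E)%E.

Definition Nalpha (M : R -> Omega -> R) (alpha : nat) (t : R) (w : Omega) : R :=
  M (fine (Order.min (T alpha w) t%:E)) w
  - M (fine (Order.min (T alpha.-1 w) t%:E)) w.

Definition in_Galpha (alpha : nat) (g : Omega -> \bar R -> E -> R) : Prop :=
  measurable_fun setT (fun z : (Omega * (\bar R * E))%type => g z.1 z.2.1 z.2.2) /\
  (forall s x, meas_wrt (Fstop (T alpha.-1)) (fun w => g w s x)).

(* int_{]0,t] x E} g(s,x) q^alpha(ds,dx), where q^alpha = p^alpha - p~^alpha,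
   p^alpha = point mass at (T_alpha, xi_alpha), and
   p~^alpha(ds,dx) = 1_{]0,T_alpha]}(s) mu(ds,dx) / mu([s,oo] x E)
   (i.e. -dF_u(A) / F_{u-}(E) with F_u(A) = mu(]u,oo] x A)). *)
Definition q_integral (alpha : nat) (mu : Omega -> probability (\bar R * E)%type R)
  (g : Omega -> \bar R -> E -> R) (t : R) (w : Omega) : \bar R :=
  ((if (T alpha w <= t%:E)%E then g w (T alpha w) (xi alpha w) else 0)%:E
   - \int[mu w]_(y in [set y : (\bar R * E)%type |
                        (0 < y.1)%E /\ (y.1 <= Order.min t%:E (T alpha w))%E])
        (g w y.1 y.2 * (fine (mu w [set z : (\bar R * E)%type | (y.1 <= z.1)%E]))^-1)%:E)%E.

Definition gtilde (alpha : nat) (g : Omega -> \bar R -> E -> R) :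
  Omega -> \bar R -> E -> R :=
  fun w s x => if ((T alpha.-1 w < s)%E && (s <= T alpha w)%E) then g w s x else 0.

End MarkedPointProcess.

(* Main.v *)
Require Import Defs.
From HB Require Import structures.
From mathcomp Require Import all_boot all_order all_algebra.
From mathcomp Require Import all_classical all_reals all_analysis.
From mathcomp Require Import measurable_realfun.
Import Order.TTheory GRing.Theory Num.Theory.
Local Open Scope classical_set_scope.
Local Open Scope ring_scope.
Section gen.
Import HBNNSimple.
Context {R : realType} {d : measure_display} {X : measurableType d}.
Variable m : {measure set X -> \bar R}.

Lemma ge0_int_change {g1 g2 : X -> \bar R} {N : set X} :
  measurable N -> m N = 0%E -> (forall x, ~ N x -> g1 x = g2 x) ->
  (forall x, 0 <= g1 x)%E -> (forall x, 0 <= g2 x)%E ->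
  (\int[m]_x g1 x <= \int[m]_x g2 x)%E.
Proof.
move=> mN N0 e g10 g20.
rewrite !ge0_integralTE //.
apply: ge_ereal_sup => _ [h /= hg1 <-].
have mC : measurable (~` N) := measurableC mN.
pose h' := proj_nnsfun h mC.
have hE x : h' x = h x * (x \in ~` N)%:R by rewrite /h' /= mindicE.
apply: (@le_trans _ _ (sintegral m h')); last first.
  apply: ereal_sup_ubound; exists h' => // x; rewrite hE.
  case: (boolP (x \in ~` N)) => [/set_mem xN|_].
    by rewrite mulr1 -e //; exact: hg1.
  by rewrite mulr0 g20.
suff -> : sintegral m h = sintegral m h' by [].
have := integral_nnsfun m measurableT h; rewrite patch_setT => <-.
have := integral_nnsfun m measurableT h'; rewrite patch_setT => <-.
have -> : (\int[m]_(x in setT) (h x)%:E = \int[m]_(x in setT) (h' x)%:E)%E.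
  apply: ae_eq_integral => //.
  - apply/measurable_EFinP; exact: measurable_funPT.
  - apply/measurable_EFinP; exact: measurable_funPT.
  exists N; split => // x /= hx; apply: contrapT => Nx; apply: hx => _.
  by rewrite mindicE mem_set // mulr1.
by [].
Qed.

Lemma int_change {D1 D2 N : set X} (f : X -> \bar R) :
  measurable N -> m N = 0%E -> (forall x, ~ N x -> (D1 x <-> D2 x)) ->
  (\int[m]_(x in D1) f x = \int[m]_(x in D2) f x)%E.
Proof.
move=> mN N0 e.
have key (g : X -> \bar R) : (forall x, 0 <= g x)%E ->
    (\int[m]_(x in D1) g x = \int[m]_(x in D2) g x)%E.
  move=> g0; rewrite !(integral_mkcond _ g).
  have p0 D x : (0 <= (g \_ D) x)%E by rewrite patchE; case: ifP.
  have ee : forall x, ~ N x -> (g \_ D1) x = (g \_ D2) x.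
    move=> x Nx; rewrite !patchE; have [h1 h2] := e x Nx.
    have -> : (x \in D1) = (x \in D2).
      by apply/idP/idP => /set_mem ?; apply/mem_set; [exact: h1|exact: h2].
    done.
  apply/eqP; rewrite eq_le; apply/andP; split.
    exact: (ge0_int_change mN N0 ee (p0 D1) (p0 D2)).
  apply: (ge0_int_change mN N0) => // x /ee ->; done.
rewrite integralE [RHS]integralE key; last by move=> x; exact: funepos_ge0.
by rewrite key //; move=> x; exact: funeneg_ge0.
Qed.

End gen.

Section S.
Context {R : realType} {d dE : measure_display}
  {Omega : measurableType d} {E : measurableType dE}.
Variable P : probability Omega R.
Variables (T : nat -> Omega -> \bar R) (xi : nat -> Omega -> E) (x0 : E).
Hypothesis Hmpp : mpp_assumptions P T xi x0.

Lemma T_step n w : (T n w <= T n.+1 w)%E.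
Proof.
case: Hmpp => _ H _ _ _; case: (H n w) => [/ltW //|[-> ->]] //.
Qed.

Lemma T_mono n m w : (n <= m)%N -> (T n w <= T m w)%E.
Proof.
move=> /subnK <-; elim: (m - n)%N => [|k IH] //=.
by rewrite addSn (le_trans IH (T_step _ _)).
Qed.

Lemma T_ge0 n w : (0 <= T n w)%E.
Proof.
case: Hmpp => [[H0 _]] _ _ _ _; rewrite -(H0 w); exact: T_mono.
Qed.

Lemma T_lt n w : (T n.+1 w < +oo)%E -> (T n w < T n.+1 w)%E.
Proof.
case: Hmpp => _ H _ _ _; case: (H n w) => [//|[_ ->]]; by rewrite ltxx.
Qed.

Lemma T_meas n : measurable_fun setT (T n).
Proof. by case: Hmpp => _ _ _ [] . Qed.

Lemma xi_meas n : measurable_fun setT (xi n).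
Proof. by case: Hmpp => _ _ _ [] . Qed.

Definition Sj (s : R) n := [set w | (T n w <= s%:E)%E /\ (s%:E < T n.+1 w)%E].

Lemma Sj_uniq s w n m : Sj s n w -> Sj s m w -> n = m.
Proof.
wlog nm : n m / (n <= m)%N.
  move=> H a b; case: (leqP n m) => [/H|/ltnW /H]; first exact.
  by move=> H'; apply/esym/H'.
move=> [_ h1] [h2 _]; apply/eqP; rewrite eqn_leq nm /=.
rewrite leqNgt; apply/negP => lt.
have := @T_mono n.+1 m w lt; rewrite leNgt => /negP; apply.
exact: (le_lt_trans h2 h1).
Qed.

Lemma Sj_meas s n : measurable (Sj s n).
Proof.
rewrite /Sj -[X in measurable X]setTI.
have -> : [set w | (T n w <= s%:E)%E /\ (s%:E < T n.+1 w)%E] =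
  (T n @^-1` `]-oo, s%:E]) `&` (T n.+1 @^-1` `]s%:E, +oo[).
  by apply/seteqP; split => w /=; rewrite !in_itv /= ?andbT.
rewrite setIA; apply: measurableI.
  by apply: T_meas => //; exact: emeasurable_itv.
by rewrite -[X in measurable X]setTI; apply: T_meas => //; exact: emeasurable_itv.
Qed.

Lemma Xproc_meas s : measurable_fun setT (Xproc T xi s).
Proof.
move=> _ B mB; rewrite setTI.
have -> : Xproc T xi s @^-1` B =
  \bigcup_n (Sj s n `&` xi n @^-1` B) `|` ((~` (\bigcup_n Sj s n)) `&` xi 0%N @^-1` B).
  apply/seteqP; split => w /=.
  - rewrite /Xproc /jump_index; case: xgetP => [n _ Sn Bx|NS Bx].
      by left; eexists; [|split; [exact: Sn|exact: Bx]].
    by right; split => // -[n _ /NS].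
  - rewrite /Xproc /jump_index; case=> [[n _ [Sn Bn]]|[NS B0]].
      by rewrite (@xget_unique _ 0%N [set m | (T m w <= s%:E)%E /\ (s%:E < T m.+1 w)%E] n Sn) // => m Sm; apply: Sj_uniq Sm Sn.
    rewrite xgetPN // => n Sn; apply: NS; by exists n.
apply: measurableU.
  apply: bigcup_measurable => n _; apply: measurableI; first exact: Sj_meas.
  by rewrite -[X in measurable X]setTI; exact: xi_meas.
apply: measurableI.
  by apply: measurableC; apply: bigcup_measurable => n _; exact: Sj_meas.
by rewrite -[X in measurable X]setTI; exact: xi_meas.
Qed.


Hypothesis Pcomplete : measure_is_complete P.

Lemma gen_meas I : gen_by_X T xi I `<=` measurable.
Proof.
move=> A HA; apply: HA; split; first exact: sigma_algebra_measurable.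
move=> _ [s [_ [B mB ->]]].
by rewrite -[X in measurable X]setTI; exact: Xproc_meas.
Qed.

Lemma gen_mono I J : I `<=` J -> gen_by_X T xi I `<=` gen_by_X T xi J.
Proof.
move=> IJ A HA M [sM GM]; apply: HA; split => //.
move=> B [s [Is HB]]; apply: GM; exists s; split => //; exact: IJ.
Qed.

Lemma compl_mono G1 G2 : G1 `<=` G2 -> P_completion P T xi G1 `<=` P_completion P T xi G2.
Proof. by move=> G12 A [B [GB HN]]; exists B; split => //; exact: G12. Qed.

Lemma compl_meas G : G `<=` measurable -> P_completion P T xi G `<=` measurable.
Proof.
move=> Gm A [B [GB [N [FN [PN sub]]]]].
have mN : measurable N := @gen_meas _ N FN.
have -> : A = (B `\` N) `|` (A `&` N).
  apply/seteqP; split => x.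
    move=> Ax; have [Nx|Nx] := pselect (N x); first by right.
    left; split => //; apply: contrapT => Bx; apply: Nx; apply: sub; by left.
  case=> [[Bx Nx]|[]//].
  apply: contrapT => Ax; apply: Nx; apply: sub; by right.
apply: measurableU; first by apply: measurableD => //; exact: Gm.
apply: Pcomplete; exists N; split => //; exact: subIsetr.
Qed.

Lemma Ft_meas t : Ft P T xi t `<=` measurable.
Proof. exact/compl_meas/gen_meas. Qed.

Lemma Finf_meas : Finf P T xi `<=` measurable.
Proof. exact/compl_meas/gen_meas. Qed.

Lemma Fstop_meas tau : Fstop P T xi tau `<=` measurable.
Proof. by move=> A [/Finf_meas]. Qed.

Lemma Ft_mono s t : s <= t -> Ft P T xi s `<=` Ft P T xi t.
Proof.
move=> st; apply: compl_mono; apply: gen_mono => u /= /andP[u0 us].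
by rewrite u0 (le_trans us st).
Qed.

Lemma Ft_Finf t : Ft P T xi t `<=` Finf P T xi.
Proof. by apply: compl_mono; apply: gen_mono => u /= /andP[]. Qed.

Variable a : nat.

Variable mu : Omega -> probability (\bar R * E)%type R.
Let Z := fun w => (T a.+1 w, xi a.+1 w).
Hypothesis Hrcd : is_rcd P (Fstop P T xi (T a)) Z mu.

Lemma Z_meas : measurable_fun setT Z.
Proof. apply: measurable_fun_pair; [exact: T_meas|exact: xi_meas]. Qed.

Lemma mu_meas B : measurable B -> measurable_fun setT (fun w => mu w B).
Proof.
move=> mB _ V mV; apply: measurableI => //.
by apply: (@Fstop_meas (T a)); case: Hrcd => H _; exact: H.
Qed.
Arguments mu_meas {B}.

Lemma HT0 : Fstop P T xi (T a) setT.
Proof.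
case: Hrcd => H _; have := H setT measurableT setT measurableT.
by rewrite preimage_setT.
Qed.


Definition Cs (s : R) := [set w | (T a w <= s%:E)%E].

Lemma Cs_meas s : measurable (Cs s).
Proof.
rewrite -[X in measurable X]setTI.
have -> : Cs s = T a @^-1` `]-oo, s%:E].
  by apply/seteqP; split => w /=; rewrite in_itv.
by apply: T_meas => //; exact: emeasurable_itv.
Qed.

Let HT := HT0.

Lemma Cs_Fstop s : 0 <= s -> Fstop P T xi (T a) (Cs s).
Proof.
move=> s0; case: HT => _ H; split.
  by have := H s s0; rewrite setTI => /(@Ft_Finf s).
move=> t t0; have := H (Num.min s t).
rewrite le_min s0 t0 => /(_ isT); rewrite setTI => Hm.
have -> : Cs s `&` [set w | (T a w <= t%:E)%E] = [set w | (T a w <= (Num.min s t)%:E)%E].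
  apply/seteqP; split => w /=; rewrite EFin_min le_min; [by move=> [-> ->]|by move=> /andP[]].
apply: Ft_mono Hm; by rewrite ge_min lexx orbT.
Qed.


Lemma arith_cancel {x y u v : \bar R} : x \is a fin_num -> x = u ->
  (x + y = u + v -> v = y)%E.
Proof.
move=> fx <- h; have := congr1 (fun z => z - x)%E h.
by rewrite !(addeC x) !addeK.
Qed.

Lemma rcd_diff C1 C2 B : Fstop P T xi (T a) C1 -> Fstop P T xi (T a) C2 ->
  C1 `<=` C2 -> measurable B ->
  (\int[P]_(w in C2 `\` C1) mu w B = P ((C2 `\` C1) `&` (Z @^-1` B)))%E.
Proof.
move=> F1 F2 C12 mB.
have m1 := @Fstop_meas _ _ F1; have m2 := @Fstop_meas _ _ F2.
have mZ : measurable (Z @^-1` B) by rewrite -[X in measurable X]setTI; exact: Z_meas.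
have mD : measurable (C2 `\` C1) by exact: measurableD.
have eC : C2 = C1 `|` (C2 `\` C1) by rewrite setDUK.
have dis : [disjoint C1 & C2 `\` C1].
  by rewrite disj_set2E; apply/eqP/seteqP; split => x // [? []].
case: Hrcd => _ H.
have h1 := H B mB C1 F1; have h2 := H B mB C2 F2.
move: h2; rewrite [in X in X -> _]eC setIUl measureU //; last 3 first.
- exact: measurableI.
- exact: measurableI.
- by apply/seteqP; split => x // [[? _] [[_ ?] _]].
rewrite ge0_integral_setU //; last first.
  by apply: measurable_funS (mu_meas mB).
move=> h2.
have fin : P (C1 `&` Z @^-1` B) \is a fin_num.
  rewrite ge0_fin_numE ?measure_ge0 //.
  by rewrite (le_lt_trans (probability_le1 _ _)) ?ltey //; exact: measurableI.
exact: (arith_cancel fin h1 h2).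
Qed.

Definition Bs (r : R) := [set y : (\bar R * E)%type | (y.1 <= r%:E)%E].

Lemma Bs_meas r : measurable (Bs r).
Proof.
have -> : Bs r = `]-oo, r%:E] `*` setT.
  by apply/seteqP; split => -[y1 y2] /=; rewrite in_itv /= /Bs /=; [move=> ->|move=> []].
apply: measurableX => //; exact: emeasurable_itv.
Qed.

Lemma ae_int0 (D : set Omega) (f : Omega -> \bar R) : measurable D ->
  measurable_fun D f -> (forall x, D x -> 0 <= f x)%E ->
  (\int[P]_(x in D) f x = 0)%E -> {ae P, forall x, D x -> f x = 0%E}.
Proof.
move=> mD mf f0 i0.
have : (\int[P]_(x in D) `|f x| = 0)%E.
  by rewrite -i0; apply: eq_integral => x /[1!inE] Dx; rewrite gee0_abs // f0.
by move/(ae_eq_integral_abs _ mD mf).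
Qed.

Lemma F1 s : 0 <= s -> {ae P, forall w, ~ (T a w <= s%:E)%E -> mu w (Bs s) = 0%E}.
Proof.
move=> s0.
have := @rcd_diff (Cs s) setT (Bs s) (@Cs_Fstop s s0) HT0 (@subsetT _ _) (Bs_meas s).
have -> : (setT `\` Cs s) `&` (Z @^-1` Bs s) = set0.
  apply/seteqP; split => w // [[_ /= h1] h2]; apply: h1.
  exact: le_trans (T_step a w) h2.
rewrite measure0 => hi.
have := @ae_int0 _ _ (measurableD measurableT (Cs_meas s))
  (measurable_funS measurableT (@subsetT _ _) (mu_meas (Bs_meas s)))
  (fun x _ => measure_ge0 _ _) hi.
by apply: filterS => w h nC; apply: h.
Qed.


Lemma Fstop0 : Fstop P T xi (T a) set0.
Proof.
have c0 : forall G : set (set Omega), smallest (sigma_algebra setT) G set0.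
  by move=> G M [[? _ _] _].
have Pc0 : forall G : set (set Omega), P_completion P T xi (smallest (sigma_algebra setT) G) set0.
  move=> G; exists set0; split; first exact: c0.
  by exists set0; split; [exact: c0|split; [exact: measure0|move=> x [[]|[]]]].
split; first exact: Pc0.
by move=> t _; rewrite set0I; exact: Pc0.
Qed.

Section grid.
Variable n : nat.
Let hh : R := (n.+1)%:R.
Definition gg k : R := k%:R / hh.

Lemma gg_ge0 k : 0 <= gg k.
Proof. by rewrite /gg divr_ge0. Qed.

Lemma ggS k : gg k.+1 = gg k + hh^-1.
Proof. by rewrite /gg -addn1 natrD mulrDl mul1r. Qed.

Definition prevC k := if k is k'.+1 then Cs (gg k') else set0.
Definition AA k := Cs (gg k) `\` prevC k.
Definition UU k := AA k `&` (Z @^-1` Bs (gg k)).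

Lemma prevC_Fstop k : Fstop P T xi (T a) (prevC k).
Proof. case: k => [|k] /=; [exact: Fstop0|exact: Cs_Fstop (gg_ge0 k)]. Qed.

Lemma prevC_sub k : prevC k `<=` Cs (gg k).
Proof.
case: k => [|k] //= w /= h; apply: (le_trans h); rewrite lee_fin ggS lerDl.
by rewrite invr_ge0.
Qed.

Lemma int_AA k : (\int[P]_(w in AA k) mu w (Bs (gg k)) = P (UU k))%E.
Proof.
exact: (@rcd_diff _ _ _ (prevC_Fstop k) (@Cs_Fstop _ (gg_ge0 k)) (prevC_sub k) (Bs_meas _)).
Qed.

Lemma gg_mono i j : (i <= j)%N -> gg i <= gg j.
Proof. by move=> ij; rewrite /gg ler_wpM2r ?invr_ge0 // ler_nat. Qed.

Lemma prevC_meas k : measurable (prevC k).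
Proof. by case: k => [|k] //=; exact: Cs_meas. Qed.

Lemma AA_meas k : measurable (AA k).
Proof. apply: measurableD; [exact: Cs_meas|exact: prevC_meas]. Qed.

Lemma UU_meas k : measurable (UU k).
Proof.
apply: measurableI; first exact: AA_meas.
by rewrite -[X in measurable X]setTI; apply: Z_meas => //; exact: Bs_meas.
Qed.

Lemma AA_triv i j w : AA i w -> AA j w -> i = j.
Proof.
wlog ij : i j / (i <= j)%N.
  move=> H hi hj; case: (leqP i j) => [/H|/ltnW /H]; first exact.
  by move=> H'; apply/esym/H'.
move=> [hi _] [_ hj]; apply/eqP; rewrite eqn_leq ij /=.
rewrite leqNgt; apply/negP => lt; apply: hj.
case: j lt {ij} => [//|j] /= lt.
by apply: (le_trans hi); rewrite lee_fin gg_mono.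
Qed.

Lemma UU_triv : trivIset setT UU.
Proof. by move=> i j _ _ [w [[hi _] [hj _]]]; exact: AA_triv hi hj. Qed.

Definition ff k := (fun w => mu w (Bs (gg k))) \_ (AA k).
Definition hn w := (\sum_(k <oo) ff k w)%E.

Lemma ff_meas k : measurable_fun setT (ff k).
Proof.
apply/(measurable_restrictT _ (AA_meas k)).
exact: (measurable_funS measurableT (@subsetT _ _) (mu_meas (Bs_meas _))).
Qed.

Lemma ff_ge0 k w : (0 <= ff k w)%E.
Proof. by rewrite /ff patchE; case: ifPn => // _; exact: measure_ge0. Qed.

Lemma hn_meas : measurable_fun setT hn.
Proof.
exact: (@ge0_emeasurable_sum _ _ _ setT ff xpredT (fun k x _ _ => ff_ge0 k x) (fun k _ => ff_meas k)).
Qed.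

Lemma int_hn : (\int[P]_w hn w = \sum_(k <oo) P (UU k))%E.
Proof.
rewrite /hn integral_nneseries //; last by move=> k w _; exact: ff_ge0.
  apply: eq_eseriesr => k _; rewrite /ff -integral_mkcond; exact: int_AA.
by move=> k; exact: ff_meas.
Qed.

Definition Fn := [set w | (T a.+1 w < +oo)%E /\ (T a.+1 w <= T a w + (hh^-1)%:E)%E].

Lemma UU_Fn k : UU k `<=` Fn.
Proof.
move=> w [[hk hp] hz]; rewrite /Bs /= in hz; split.
  by apply: (le_lt_trans hz); rewrite ltey.
apply: (le_trans hz); case: k hk hp {hz} => [|k] hk /= hp.
  by rewrite /gg mul0r; apply: adde_ge0; [exact: T_ge0|rewrite lee_fin invr_ge0].
rewrite ggS EFinD; apply: leeD2r; apply: ltW; rewrite ltNge; exact/negP.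
Qed.

Lemma Fn_meas : measurable Fn.
Proof.
have m1 : measurable_fun setT (T a.+1) := T_meas _.
have m2 : measurable_fun setT (fun w => T a w + (hh^-1)%:E)%E.
  by apply: emeasurable_funD; [exact: T_meas|exact: measurable_cst].
have := measurable_lee measurableT m1 m2; rewrite setTI => h1.
have h0 : measurable [set w | (T a.+1 w < +oo)%E].
  have := measurable_lte measurableT m1 (measurable_cst +oo%E).
  by rewrite setTI.
have -> : Fn = [set w | (T a.+1 w < +oo)%E] `&` [set w | (T a.+1 w <= T a w + (hh^-1)%:E)%E] by [].
exact: measurableI.
Qed.

Lemma int_hn_le : (\int[P]_w hn w <= P Fn)%E.
Proof.
rewrite int_hn.
have : P (\bigcup_(k in setT) UU k) = (\sum_(i <oo | i \in setT) P (UU i))%E.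
  by apply: measure_bigcup; [move=> i _; exact: UU_meas|exact: UU_triv].
rewrite (@eq_eseriesl _ _ xpredT) => [<-|i]; last by rewrite in_setT.
apply: le_measure; rewrite ?inE.
- by apply: bigcup_measurable => k _; exact: UU_meas.
- exact: Fn_meas.
- by move=> w [k _ /UU_Fn].
Qed.

End grid.

Lemma Fn_cvg0 : (P \o Fn) @ \oo --> 0%E.
Proof.
have -> : 0%E = P (\bigcap_n Fn n).
  rewrite (_ : \bigcap_n Fn n = set0) ?measure0 //.
  apply/seteqP; split => w // hw.
  have [h1 h2] := hw 0%N (I : setT 0%N).
  have Tlt : (T a w < +oo)%E := le_lt_trans (T_step a w) h1.
  have : (T a.+1 w <= T a w)%E.
    apply/lee_addgt0Pr => e e0.
    have [N _ hN] := near_infty_natSinv_lt (PosNum e0).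
    have [_ h] := hw N I; apply: (le_trans h); apply: leeD2l.
    by rewrite lee_fin; apply: ltW; exact: (hN N (leqnn N)).
  by rewrite leNgt (@T_lt a w h1).
apply: nonincreasing_cvg_mu.
- by rewrite (le_lt_trans (probability_le1 _ _)) ?ltey //; exact: Fn_meas.
- by move=> k; exact: Fn_meas.
- by apply: bigcapT_measurable => k; exact: Fn_meas.
- apply/nonincreasing_seqP => k; apply/subsetPset => w [h1 h2]; split => //.
  apply: (le_trans h2); apply: leeD2l; rewrite lee_fin.
  by rewrite lef_pV2 ?posrE ?ltr0Sn // ler_nat.
Qed.

Definition Bx (z : \bar R) := [set y : (\bar R * E)%type | (y.1 <= z)%E].

Lemma Bx_meas z : measurable (Bx z).
Proof.
have -> : Bx z = `]-oo, z] `*` setT.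
  by apply/seteqP; split => -[y1 y2] /=; rewrite in_itv /= /Bx /=; [move=> ->|move=> []].
apply: measurableX => //; exact: emeasurable_itv.
Qed.

Lemma phi_le_hn n w : (T a w < +oo)%E -> (mu w (Bx (T a w)) <= hn n w)%E.
Proof.
move=> Tfin.
have ex : exists k, (T a w <= (gg n k)%:E)%E.
  exists (Num.truncn (fine (T a w) * (n.+1)%:R)).+1.
  rewrite -(@fineK _ (T a w)); last by rewrite ge0_fin_numE ?T_ge0.
  rewrite lee_fin /gg ler_pdivlMr ?ltr0Sn //; apply: ltW; exact: truncnS_gt.
case: (ex_minnP ex) => k Pk kmin.
have Ak : AA n k w.
  split => //; case: k Pk kmin => [|k] Pk kmin //= hk.
  by have := kmin _ hk; rewrite ltnn.
apply: (@le_trans _ _ (ff n k w)).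
  rewrite /ff patchE mem_set //; apply: le_measure; rewrite ?inE.
  - exact: Bx_meas.
  - exact: Bs_meas.
  - by move=> y; rewrite /Bx /Bs /= => h; exact: le_trans h Pk.
rewrite /hn; apply: le_trans (nneseries_lim_ge k.+1 _); last by move=> *; exact: ff_ge0.
rewrite big_nat_recr //=; apply: leeDr; apply: sume_ge0 => *; exact: ff_ge0.
Qed.

Lemma F2 : {ae P, forall w, (T a w < +oo)%E -> mu w (Bx (T a w)) = 0%E}.
Proof.
pose psi w := einfs (fun n => hn n w) 0%N.
have mpsi : measurable_fun setT psi.
  exact: (measurable_fun_einfs (fun n => hn_meas n) 0%N).
have psi_le n w : (psi w <= hn n w)%E.
  by apply: ereal_inf_lbound; exists n.
have psi_ge0 w : (0 <= psi w)%E.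
  apply/ereal_infP => _ [k _ <-]; rewrite /hn.
  by apply: nneseries_ge0 => *; exact: ff_ge0.
have ip : (\int[P]_w psi w = 0)%E.
  have ge : (0 <= \int[P]_w psi w)%E by apply: integral_ge0 => w _; exact: psi_ge0.
  apply/eqP; rewrite eq_le ge andbT.
  have : (\int[P]_w psi w <= limn (P \o Fn))%E.
    apply: lime_ge; first by apply/cvg_ex; exists 0%E; exact: Fn_cvg0.
    apply: nearW => n /=; apply: le_trans (int_hn_le n).
    by apply: ge0_le_integral => //; try solve [move=> w _; exact: psi_ge0|exact: hn_meas|move=> w _; exact: psi_le|exact: mpsi].
  by rewrite (cvg_lim _ Fn_cvg0).
have := @ae_int0 setT psi measurableT mpsi (fun w _ => psi_ge0 w) ip.
apply: filterS => w h Tfin; apply/eqP; rewrite eq_le measure_ge0 andbT.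
rewrite -(h I); apply/ereal_infP => _ [k _ <-]; exact: phi_le_hn.
Qed.

Lemma key (g : Omega -> \bar R -> E -> R) t : 0 <= t ->
  {ae P, forall w, q_integral T xi a.+1 mu g t w =
                   q_integral T xi a.+1 mu (gtilde T a.+1 g) t w}.
Proof.
move=> t0; have := @F1 t t0; have := F2; apply: filterS2 => w h2 h1.
rewrite /q_integral; congr (_ - _)%E.
  case: ifP => // hT; rewrite /gtilde /= lexx andbT.
  by rewrite (@T_lt a w) // (le_lt_trans hT) ?ltey.
set N := Bx (T a w) `&` Bs t.
have mN : measurable N by apply: measurableI; [exact: Bx_meas|exact: Bs_meas].
have N0 : mu w N = 0%E.
  have [Tfin|Tinf] := boolP (T a w < +oo)%E.
    apply/eqP; rewrite eq_le measure_ge0 andbT -(h2 Tfin).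
    by apply: le_measure; rewrite ?inE //; [exact: Bx_meas|exact: subIsetl].
  have nT : ~ (T a w <= t%:E)%E.
    move=> h; move: Tinf; rewrite ltey negbK => /eqP Te.
    by move: h; rewrite Te leNgt ltey.
  apply/eqP; rewrite eq_le measure_ge0 andbT -(h1 nT).
  by apply: le_measure; rewrite ?inE //; [exact: Bs_meas|exact: subIsetr].
set D := [set y : (\bar R * E)%type | (0 < y.1)%E /\ (y.1 <= Order.min t%:E (T a.+1 w))%E].
have eD : forall y, ~ N y -> (D y <-> (D `\` N) y).
  by move=> y Ny; split => [Dy|[]//]; split.
rewrite (int_change (mu w) _ mN N0 eD) [RHS](int_change (mu w) _ mN N0 eD).
apply: eq_integral => y /set_mem [[y0 ymin] Ny].
move: ymin; rewrite le_min => /andP[yt yT].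
have Ty : (T a w < y.1)%E.
  rewrite ltNge; apply/negP => h; apply: Ny; split => //.
by rewrite /gtilde /= Ty yT.
Qed.

End S.

Theorem mainTheorem2 (R : realType) (d dE : measure_display)
  (Omega : measurableType d) (E : measurableType dE)
  (P : probability Omega R)
  (T : nat -> Omega -> \bar R) (xi : nat -> Omega -> E) (x0 : E)
  (M : R -> Omega -> R) (alpha : nat)
  (mu : Omega -> probability (\bar R * E)%type R)
  (g : Omega -> \bar R -> E -> R) :
  measure_is_complete P ->
  mpp_assumptions P T xi x0 ->
  is_martingale P T xi M ->
  sq_integrable P M ->
  (0 < alpha)%N ->
  is_rcd P (Fstop P T xi (T alpha.-1)) (fun w => (T alpha w, xi alpha w)) mu ->
  in_Galpha P T xi alpha g ->
  (forall t, 0 <= t ->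
     {ae P, forall w, (Nalpha T M alpha t w)%:E = q_integral T xi alpha mu g t w}) ->
  forall t, 0 <= t ->
     {ae P, forall w,
        (Nalpha T M alpha t w)%:E = q_integral T xi alpha mu (gtilde T alpha g) t w}.
Proof.
move=> Pc Hmpp _ _ ha Hrcd _ Hrep t t0.
case: alpha ha Hrcd Hrep => [//|a] _ /= Hrcd Hrep.
have := @key _ _ _ _ _ P T xi x0 Hmpp Pc a mu Hrcd g t t0.
have := Hrep t t0.
by apply: filterS2 => w -> ->.
Qed.
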